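(* Let $F$ be a distribution function whose hazard rate $h$ satisfies (H) and is regularly varying of index $-1$. Then for all positive numbers $a,b,c$, $$\overline F(t/a)\,\overline F(t/b)=o\big(\overline F(t/c)\big)\qquad(t\to\infty),$$ i.e. $\overline{\mathsf M_aF}\,\overline{\mathsf M_bF}=o(\overline{\mathsf M_cF})$.
   Context: For a distribution function $F$, $\overline F=1-F$, and for $c>0$, $\mathsf M_cF$ is the distribution of $cY$ with $Y\sim F$, so $\overline{\mathsf M_cF}(t)=\overline F(t/c)$. The hazard rate is $h=F'/\overline F$, assumed to exist for all large $t$, so that $\overline F(t)=\overline F(t_0)\exp(-\int_{t_0}^th(u)\,du)$. Condition (H): $h$ is regularly varying, $\lim_{t\to\infty}th(t)=+\infty$, $\lim_{t\to\infty}h(t)=0$. *)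

(* Defs.v *)
From Stdlib Require Import Reals.
From Coquelicot Require Import Coquelicot.
Open Scope R_scope.

Definition distribution_function (F : R -> R) : Prop :=
  (forall x y, x <= y -> F x <= F y) /\
  (forall x, filterlim F (at_right x) (locally (F x))) /\
  is_lim F m_infty 0 /\
  is_lim F p_infty 1.

Definition Fbar (F : R -> R) : R -> R := fun t => 1 - F t.

(* M_c F : distribution of cY, Y ~ F  (c > 0), i.e. (M_c F)(t) = F(t/c). *)
Definition Mc (c : R) (F : R -> R) : R -> R := fun t => F (t / c).

Definition hazard_rate (F h : R -> R) : Prop :=
  exists t0 : R, forall t, t0 <= t ->
    ex_derive F t /\ 0 < Fbar F t /\ h t = Derive F t / Fbar F t /\
    ex_RInt h t0 t /\ Fbar F t = Fbar F t0 * exp (- RInt h t0 t).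

Definition regularly_varying (rho : R) (h : R -> R) : Prop :=
  (exists t1 : R, forall t, t1 < t -> 0 < h t) /\
  (forall x, 0 < x -> is_lim (fun t => h (x * t) / h t) p_infty (Rpower x rho)).

Definition condition_H (h : R -> R) : Prop :=
  (exists rho : R, regularly_varying rho h) /\
  is_lim (fun t => t * h t) p_infty p_infty /\
  is_lim h p_infty 0.

Definition little_o_infty (f g : R -> R) : Prop :=
  forall eps : R, 0 < eps ->
    exists M : R, forall t, M < t -> Rabs (f t) <= eps * Rabs (g t).

(* Main.v *)
Require Import Defs.
From Stdlib Require Import Reals Lra Lia.
From Coquelicot Require Import Coquelicot.
Open Scope R_scope.


Lemma scalR (a b : R) : scal a b = a * b.
Proof. reflexivity. Qed.
Lemma plusR (a b : R) : plus a b = a + b.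
Proof. reflexivity. Qed.

Section S.
Context (h : R -> R) (T0 : R)
  (Hpos : forall x, T0 <= x -> 0 < h x)
  (Hint : forall u v, T0 <= u -> u <= v -> ex_RInt h u v).

Lemma chas u v w : T0 <= u -> u <= v -> v <= w ->
  RInt h u v + RInt h v w = RInt h u w.
Proof.
  intros. rewrite <- (RInt_Chasles h u v w); [reflexivity| apply Hint; lra | apply Hint; lra].
Qed.

Lemma Ige0 u v : T0 <= u -> u <= v -> 0 <= RInt h u v.
Proof.
  intros. apply RInt_ge_0; auto. intros x Hx. left; apply Hpos; lra.
Qed.

Lemma scale_step al eps U u v : 0 < al ->
  (forall x, U <= x -> (1 - eps) * h x <= al * h (al * x)) ->
  U <= u -> u <= v -> T0 <= al * u -> T0 <= u ->
  (1 - eps) * RInt h u v <= RInt h (al * u) (al * v).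
Proof.
  intros Hal Hr HU Huv HT HT'.
  assert (E : ex_RInt h (al * u + 0) (al * v + 0)).
  { apply Hint. lra. apply Rplus_le_compat_r, Rmult_le_compat_l; lra. }
  replace (RInt h (al * u) (al * v)) with (RInt h (al * u + 0) (al * v + 0))
    by (rewrite !Rplus_0_r; reflexivity).
  rewrite <- RInt_comp_lin by exact E.
  assert (Ehuv : ex_RInt h u v) by (apply Hint; lra).
  pose proof (RInt_scal h u v (1 - eps) Ehuv) as K.
  change (RInt (fun x => (1 - eps) * h x) u v = (1 - eps) * RInt h u v) in K.
  rewrite <- K.
  apply RInt_le; [exact Huv| | |].
  - exact (ex_RInt_scal h u v (1 - eps) Ehuv).
  - exact (ex_RInt_comp_lin h al 0 u v E).
  - intros x Hx. apply Rle_trans with (al * h (al * x)); [apply Hr; lra|].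
    rewrite Rplus_0_r. right; reflexivity.
Qed.

Lemma pow_le1 al m : 0 <= al <= 1 -> al ^ m <= 1.
Proof. intros. rewrite <- (pow1 m). apply pow_incr. lra. Qed.

Lemma pow_dec al s k n : 0 < al < 1 -> 0 < s -> (k <= n)%nat -> al ^ n * s <= al ^ k * s.
Proof.
  intros Ha Hs Hk. replace n with (k + (n - k))%nat by lia.
  rewrite pow_add. apply Rmult_le_compat_r; [lra|].
  pose proof (pow_le1 al (n - k)) as P. pose proof (pow_lt al k) as Q.
  assert (0 <= al <= 1) by lra. specialize (P H). specialize (Q ltac:(lra)). nra.
Qed.

Lemma blocks al eps U s n : 0 < al < 1 -> 0 <= eps <= 1 ->
  (forall x, U <= x -> (1 - eps) * h x <= al * h (al * x)) -> 0 < s ->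
  Rmax U T0 <= al ^ (n + 1) * s ->
  forall k, (k <= n)%nat ->
  (1 - INR k * eps) * RInt h (al * s) s <= RInt h (al ^ (k + 1) * s) (al ^ k * s).
Proof.
  intros Ha He Hr Hs HM.
  assert (HU : U <= al ^ (n + 1) * s) by (eapply Rle_trans; [apply Rmax_l| exact HM]).
  assert (HT : T0 <= al ^ (n + 1) * s) by (eapply Rle_trans; [apply Rmax_r| exact HM]).
  assert (Hd : forall j, (j <= n + 1)%nat -> al ^ (n + 1) * s <= al ^ j * s)
    by (intros; apply pow_dec; lra || lia).
  assert (J0 : 0 <= RInt h (al * s) s).
  { apply Ige0. specialize (Hd 1%nat ltac:(lia)). simpl in Hd. lra.
    assert (al * s <= 1 * s) by (apply Rmult_le_compat_r; lra). lra. }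
  induction k as [|k IH]; intros Hk.
  - simpl. rewrite Rmult_1_r, Rmult_1_l. right; ring.
  - specialize (IH ltac:(lia)).
    assert (St : (1 - eps) * RInt h (al ^ (k + 1) * s) (al ^ k * s)
                 <= RInt h (al * (al ^ (k + 1) * s)) (al * (al ^ k * s))).
    { apply scale_step with U; try lra; try exact Hr.
      - pose proof (Hd (k + 1)%nat ltac:(lia)). lra.
      - apply pow_dec; lra || lia.
      - replace (al * (al ^ (k + 1) * s)) with (al ^ (S k + 1) * s) by (simpl; ring).
        pose proof (Hd (S k + 1)%nat ltac:(lia)). lra.
      - pose proof (Hd (k + 1)%nat ltac:(lia)). lra. }
    replace (al * (al ^ (k + 1) * s)) with (al ^ (S k + 1) * s) in St by (simpl; ring).
    replace (al * (al ^ k * s)) with (al ^ S k * s) in St by (simpl; ring).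
    rewrite S_INR.
    set (J := RInt h (al * s) s) in *.
    set (Jk := RInt h (al ^ (k + 1) * s) (al ^ k * s)) in *.
    assert (P1 : 0 <= (1 - eps) * (Jk - (1 - INR k * eps) * J)) by (apply Rmult_le_pos; lra).
    assert (P2 : 0 <= INR k * (eps * eps) * J).
    { apply Rmult_le_pos; [apply Rmult_le_pos; [apply pos_INR| nra]| lra]. }
    lra.
Qed.

Lemma sumblocks al eps U s n : 0 < al < 1 -> 0 <= eps <= 1 ->
  (forall x, U <= x -> (1 - eps) * h x <= al * h (al * x)) -> 0 < s ->
  Rmax U T0 <= al ^ (n + 1) * s ->
  forall m, (m <= n)%nat ->
  INR m * (1 - INR n * eps) * RInt h (al * s) s <= RInt h (al ^ m * s) s.
Proof.
  intros Ha He Hr Hs HM.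
  assert (HT : T0 <= al ^ (n + 1) * s) by (eapply Rle_trans; [apply Rmax_r| exact HM]).
  assert (Hd : forall j, (j <= n + 1)%nat -> al ^ (n + 1) * s <= al ^ j * s)
    by (intros; apply pow_dec; lra || lia).
  assert (J0 : 0 <= RInt h (al * s) s).
  { apply Ige0. specialize (Hd 1%nat ltac:(lia)). simpl in Hd. lra.
    assert (al * s <= 1 * s) by (apply Rmult_le_compat_r; lra). lra. }
  induction m as [|m IH]; intros Hm.
  - simpl. rewrite Rmult_1_l. pose proof (RInt_point s h) as K. change (RInt h s s = 0) in K. rewrite K. lra.
  - specialize (IH ltac:(lia)).
    pose proof (blocks al eps U s n Ha He Hr Hs HM m ltac:(lia)) as B.
    replace (m + 1)%nat with (S m) in B by lia.
    rewrite <- (chas (al ^ S m * s) (al ^ m * s) s).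
    2: { pose proof (Hd (S m) ltac:(lia)). lra. }
    2: { apply pow_dec; lra || lia. }
    2: { replace s with (al ^ 0 * s) at 2 by (simpl; ring). apply pow_dec; lra || lia. }
    rewrite S_INR.
    set (J := RInt h (al * s) s) in *.
    assert (le_mn : INR m <= INR n) by (apply le_INR; lia).
    assert (P : 0 <= (INR n - INR m) * eps * J).
    { apply Rmult_le_pos; [apply Rmult_le_pos; lra| lra]. }
    lra.
Qed.
End S.


Section S2.
Context (h : R -> R) (T0 : R)
  (Hpos : forall x, T0 <= x -> 0 < h x)
  (Hint : forall u v, T0 <= u -> u <= v -> ex_RInt h u v)
  (Hrv : forall x, 0 < x -> is_lim (fun t => h (x * t) / h t) p_infty (/ x)).

Lemma evblocks al n : 0 < al < 1 -> (1 <= n)%nat ->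
  exists S, forall s, S <= s -> INR n / 2 * RInt h (al * s) s <= RInt h T0 s.
Proof.
  intros Ha Hn.
  assert (Hn' : 1 <= INR n) by (change 1 with (INR 1); apply le_INR; lia).
  set (eps := / (2 * INR n)).
  assert (Heps : 0 < eps) by (unfold eps; apply Rinv_0_lt_compat; lra).
  assert (Hne : INR n * eps = 1 / 2) by (unfold eps; field; lra).
  assert (He1 : eps <= 1) by nra.
  pose proof (Hrv al ltac:(lra)) as L. apply is_lim_spec in L.
  assert (Hea : 0 < eps / al) by (apply Rdiv_lt_0_compat; lra).
  destruct (L (mkposreal _ Hea)) as [M HM]. simpl in HM.
  set (U := Rmax M T0 + 1).
  assert (Hr : forall x, U <= x -> (1 - eps) * h x <= al * h (al * x)).
  { intros x Hx.
    assert (HMx : M < x) by (unfold U in Hx; pose proof (Rmax_l M T0); lra).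
    assert (HTx : T0 <= x) by (unfold U in Hx; pose proof (Rmax_r M T0); lra).
    specialize (HM x HMx). apply Rabs_def2 in HM. destruct HM as [_ HM].
    pose proof (Hpos x HTx) as hx.
    set (r := h (al * x) / h x) in HM.
    assert (E : h (al * x) = r * h x) by (unfold r; field; lra).
    assert (E2 : al * (/ al - eps / al) = 1 - eps) by (field; lra).
    assert (al * r >= 1 - eps) by nra.
    rewrite E. nra. }
  pose proof (pow_lt al (n + 1) ltac:(lra)) as Hp.
  exists (Rmax 1 (Rmax U T0 / al ^ (n + 1))).
  intros s Hs.
  assert (Hs0 : 0 < s) by (pose proof (Rmax_l 1 (Rmax U T0 / al ^ (n + 1))); lra).
  assert (HM2 : Rmax U T0 <= al ^ (n + 1) * s).
  { pose proof (Rmax_r 1 (Rmax U T0 / al ^ (n + 1))).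
    assert (Rmax U T0 / al ^ (n + 1) <= s) by lra.
    apply Rmult_le_compat_l with (r := al ^ (n + 1)) in H0; [|lra].
    replace (al ^ (n + 1) * (Rmax U T0 / al ^ (n + 1))) with (Rmax U T0) in H0 by (field; lra).
    lra. }
  pose proof (sumblocks h T0 Hpos Hint al eps U s n Ha ltac:(lra) Hr Hs0 HM2 n (le_n n)) as B.
  rewrite Hne in B.
  assert (HT : T0 <= al ^ (n + 1) * s) by (eapply Rle_trans; [apply Rmax_r| exact HM2]).
  assert (H1 : al ^ (n + 1) * s <= al ^ n * s) by (apply pow_dec; lra || lia).
  assert (H2 : al ^ n * s <= s) by (replace s with (al ^ 0 * s) at 2 by (simpl; ring); apply pow_dec; lra || lia).
  rewrite <- (chas h T0 Hint T0 (al ^ n * s) s) by lra.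
  pose proof (Ige0 h T0 Hpos Hint T0 (al ^ n * s) ltac:(lra) ltac:(lra)).
  lra.
Qed.

Lemma Ginf (Hth : forall M, exists N, forall x, N < x -> M < x * h x) :
  forall B, exists S, forall s, S <= s -> B <= RInt h T0 s.
Proof.
  intros B. destruct (INR_unbounded (4 * Rabs B + 1)) as [n Hn].
  assert (Hn1 : (1 <= n)%nat).
  { destruct n; [simpl in Hn; pose proof (Rabs_pos B); lra| lia]. }
  destruct (evblocks (1/2) n ltac:(lra) Hn1) as [S1 HS1].
  destruct (Hth 1) as [N HN].
  exists (Rmax S1 (Rmax (2 * Rabs N + 2) (2 * Rabs T0 + 2))).
  intros s Hs.
  pose proof (Rmax_l S1 (Rmax (2 * Rabs N + 2) (2 * Rabs T0 + 2))).
  pose proof (Rmax_r S1 (Rmax (2 * Rabs N + 2) (2 * Rabs T0 + 2))).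
  pose proof (Rmax_l (2 * Rabs N + 2) (2 * Rabs T0 + 2)).
  pose proof (Rmax_r (2 * Rabs N + 2) (2 * Rabs T0 + 2)).
  pose proof (Rle_abs N). pose proof (Rle_abs T0). pose proof (Rabs_pos N).
  pose proof (Rabs_pos T0).
  specialize (HS1 s ltac:(lra)).
  assert (Hs0 : 0 < s) by lra.
  assert (J : 1 / 2 <= RInt h (1 / 2 * s) s).
  { assert (K : RInt (fun _ => / s) (1 / 2 * s) s = (s - 1 / 2 * s) * / s)
      by exact (RInt_const (1 / 2 * s) s (/ s)).
    replace (1 / 2) with ((s - 1 / 2 * s) * / s) at 1 by (field; lra).
    rewrite <- K.
    apply RInt_le; [lra| apply ex_RInt_const | apply Hint; lra |].
    intros x Hx. pose proof (HN x ltac:(lra)). pose proof (Hpos x ltac:(lra)).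
    assert (s * / s = 1) by (field; lra).
    assert (0 < / s) by (apply Rinv_0_lt_compat; lra).
    nra. }
  pose proof (Rle_abs B). assert (0 <= INR n * (RInt h (1 / 2 * s) s - 1 / 2)) by (apply Rmult_le_pos; [apply pos_INR| lra]). lra.
Qed.

Lemma ratio g : 0 < g ->
  exists S, forall s, S <= s -> 3 / 4 * RInt h T0 s <= RInt h T0 (g * s).
Proof.
  intros Hg. destruct (Rlt_or_le g 1) as [Hg1|Hg1].
  - destruct (evblocks g 8 ltac:(lra) ltac:(lia)) as [S1 HS1].
    exists (Rmax S1 (Rmax (T0 / g) 0)). intros s Hs.
    pose proof (Rmax_l S1 (Rmax (T0 / g) 0)).
    pose proof (Rmax_r S1 (Rmax (T0 / g) 0)).
    pose proof (Rmax_l (T0 / g) 0). pose proof (Rmax_r (T0 / g) 0).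
    specialize (HS1 s ltac:(lra)).
    replace (INR 8 / 2) with 4 in HS1 by (simpl; field).
    assert (T0 <= g * s).
    { assert (T0 / g <= s) by lra.
      apply Rmult_le_compat_l with (r := g) in H3; [|lra].
      replace (g * (T0 / g)) with T0 in H3 by (field; lra). lra. }
    assert (g * s <= s) by nra.
    rewrite <- (chas h T0 Hint T0 (g * s) s) in HS1 |- * by lra.
    pose proof (Ige0 h T0 Hpos Hint T0 (g * s) ltac:(lra) ltac:(lra)).
    lra.
  - exists (Rmax T0 0). intros s Hs.
    pose proof (Rmax_l T0 0). pose proof (Rmax_r T0 0).
    assert (s <= g * s) by nra.
    rewrite <- (chas h T0 Hint T0 s (g * s)) by lra.
    pose proof (Ige0 h T0 Hpos Hint T0 s ltac:(lra) ltac:(lra)).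
    pose proof (Ige0 h T0 Hpos Hint s (g * s) ltac:(lra) ltac:(lra)).
    lra.
Qed.
End S2.


Theorem lemma4p3p1 (F h : R -> R) :
  distribution_function F ->
  hazard_rate F h ->
  condition_H h ->
  regularly_varying (-1) h ->
  forall a b c : R, 0 < a -> 0 < b -> 0 < c ->
    little_o_infty (fun t => Fbar (Mc a F) t * Fbar (Mc b F) t) (Fbar (Mc c F)).
Proof.
  intros _ [t0 HR] [_ [Hth _]] [[t1 Ht1] Hrv0] a b c Ha Hb Hc.
  assert (Hrv : forall x, 0 < x -> is_lim (fun t => h (x * t) / h t) p_infty (/ x)).
  { intros x Hx. specialize (Hrv0 x Hx).
    replace (Rpower x (-1)) with (/ x) in Hrv0; [exact Hrv0|].
    replace (-1) with (- (1)) by ring. rewrite Rpower_Ropp, Rpower_1; auto. }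
  apply is_lim_spec in Hth. simpl in Hth.
  assert (Hth' : forall M, exists N, forall x, N < x -> M < x * h x).
  { intros M. destruct (Hth M) as [N HN]. exists N. exact HN. }
  set (T0 := Rmax t0 t1 + 1).
  assert (HT0 : t0 <= T0 /\ t1 < T0).
  { unfold T0. pose proof (Rmax_l t0 t1). pose proof (Rmax_r t0 t1). lra. }
  assert (Hpos : forall x, T0 <= x -> 0 < h x) by (intros; apply Ht1; lra).
  assert (Hint : forall u v, T0 <= u -> u <= v -> ex_RInt h u v).
  { intros u v Hu Huv. destruct (HR v ltac:(lra)) as [_ [_ [_ [E _]]]].
    apply (ex_RInt_Chasles_2 h t0 u v); [lra| exact E]. }
  destruct (HR T0 ltac:(lra)) as [_ [HK [_ [E0 F0]]]].
  set (K := Fbar F T0) in *.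
  assert (HF : forall x, T0 <= x -> Fbar F x = K * exp (- RInt h T0 x)).
  { intros x Hx. destruct (HR x ltac:(lra)) as [_ [_ [_ [Ex Fx]]]].
    rewrite Fx, F0.
    pose proof (RInt_Chasles h t0 T0 x E0 (Hint T0 x ltac:(lra) Hx)) as C.
    change (RInt h t0 T0 + RInt h T0 x = RInt h t0 x) in C.
    rewrite <- C.
    rewrite Rmult_assoc, <- exp_plus. f_equal. f_equal. ring. }
  intros eps Heps.
  set (al := c / a). set (be := c / b).
  assert (Hal : 0 < al) by (apply Rdiv_lt_0_compat; lra).
  assert (Hbe : 0 < be) by (apply Rdiv_lt_0_compat; lra).
  destruct (ratio h T0 Hpos Hint Hrv al Hal) as [Sa HSa].
  destruct (ratio h T0 Hpos Hint Hrv be Hbe) as [Sb HSb].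
  destruct (Ginf h T0 Hpos Hint Hrv Hth' (2 * (K / eps))) as [SG HSG].
  set (W := Rmax (Rmax Sa Sb) (Rmax SG (Rmax T0 (Rmax (T0 / al) (T0 / be))))).
  exists (c * W). intros t Ht.
  set (s := t / c).
  assert (Hs : W < s).
  { unfold s. apply Rmult_lt_compat_l with (r := / c) in Ht; [|apply Rinv_0_lt_compat; lra].
    replace (/ c * (c * W)) with W in Ht by (field; lra). unfold Rdiv. lra. }
  assert (Hm : Sa <= s /\ Sb <= s /\ SG <= s /\ T0 <= s /\ T0 / al <= s /\ T0 / be <= s).
  { unfold W in Hs.
    repeat match goal with |- context [Rmax ?x ?y] =>
      pose proof (Rmax_l x y); pose proof (Rmax_r x y); fail
    end.
    pose proof (Rmax_l (Rmax Sa Sb) (Rmax SG (Rmax T0 (Rmax (T0 / al) (T0 / be))))).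
    pose proof (Rmax_r (Rmax Sa Sb) (Rmax SG (Rmax T0 (Rmax (T0 / al) (T0 / be))))).
    pose proof (Rmax_l Sa Sb). pose proof (Rmax_r Sa Sb).
    pose proof (Rmax_l SG (Rmax T0 (Rmax (T0 / al) (T0 / be)))).
    pose proof (Rmax_r SG (Rmax T0 (Rmax (T0 / al) (T0 / be)))).
    pose proof (Rmax_l T0 (Rmax (T0 / al) (T0 / be))).
    pose proof (Rmax_r T0 (Rmax (T0 / al) (T0 / be))).
    pose proof (Rmax_l (T0 / al) (T0 / be)). pose proof (Rmax_r (T0 / al) (T0 / be)).
    lra. }
  destruct Hm as [H1 [H2 [H3 [H4 [H5 H6]]]]].
  assert (Ha' : T0 <= al * s).
  { apply Rmult_le_compat_l with (r := al) in H5; [|lra].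
    replace (al * (T0 / al)) with T0 in H5 by (field; lra). exact H5. }
  assert (Hb' : T0 <= be * s).
  { apply Rmult_le_compat_l with (r := be) in H6; [|lra].
    replace (be * (T0 / be)) with T0 in H6 by (field; lra). exact H6. }
  change (Rabs (Fbar F (t / a) * Fbar F (t / b)) <= eps * Rabs (Fbar F (t / c))).
  replace (t / a) with (al * s) by (unfold al, s; field; lra).
  replace (t / b) with (be * s) by (unfold be, s; field; lra).
  fold s.
  rewrite (HF _ Ha'), (HF _ Hb'), (HF _ H4).
  specialize (HSa s H1). specialize (HSb s H2). specialize (HSG s H3).
  set (Ga := RInt h T0 (al * s)) in *.
  set (Gb := RInt h T0 (be * s)) in *.
  set (Gs := RInt h T0 s) in *.
  assert (Kp : 0 < K) by exact HK.
  pose proof (exp_pos (- Ga)). pose proof (exp_pos (- Gb)). pose proof (exp_pos (- Gs)).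
  rewrite (Rabs_pos_eq (K * exp (- Gs))) by (apply Rmult_le_pos; lra).
  rewrite (Rabs_pos_eq (K * exp (- Ga) * (K * exp (- Gb))))
    by (apply Rmult_le_pos; apply Rmult_le_pos; lra).
  set (X := Ga + Gb - Gs).
  assert (EX : exp (- Ga) * exp (- Gb) = exp (- X) * exp (- Gs)).
  { rewrite <- !exp_plus. f_equal. unfold X. ring. }
  assert (HX : K / eps <= X) by (unfold X; lra).
  assert (Kq : 0 < K / eps) by (apply Rdiv_lt_0_compat; lra).
  pose proof (exp_ineq1 X ltac:(lra)) as EI.
  assert (KX : K * exp (- X) <= eps).
  { rewrite exp_Ropp. pose proof (exp_pos X).
    assert (K <= eps * exp X).
    { assert (eps * (K / eps) = K) by (field; lra). nra. }
    apply Rmult_le_reg_r with (exp X); [lra|].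
    rewrite Rmult_assoc, Rinv_l by lra. lra. }
  replace (K * exp (- Ga) * (K * exp (- Gb))) with ((K * exp (- X)) * (K * exp (- Gs)))
    by (rewrite <- (Rmult_comm (exp (-Gb))); nra).
  apply Rmult_le_compat_r; [| exact KX].
  apply Rmult_le_pos; lra.
Qed.
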